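(* Let $\alpha<0$, let $f=(1-\alpha\varphi)^{1/\alpha}\in\mathcal{C}^+_\alpha(\mathbb{R}^n)$, let $0\le l<n$ and $p\ge 0$. If $-\frac{1}{n-l+p}<\alpha$, then $$\int_{\mathbb{R}^n}|x|^p\,\big(1-\alpha\varphi(x)\big)^{\frac1\alpha-l}\,dx<+\infty .$$ In particular, if $-\frac1n<\alpha<0$, then $\int_{\mathbb{R}^n}f(x)\,dx<+\infty$ and $\int_{\mathbb{R}^n}f(x)^{1-\alpha}\,dx<+\infty$.
   Context: $\mathrm{Conv}(\mathbb{R}^n)$ denotes the set of proper, convex, lower semi-continuous functions $\varphi:\mathbb{R}^n\to\mathbb{R}\cup\{+\infty\}$. A function $\varphi$ is coercive if $\liminf_{|x|\to\infty}\varphi(x)/|x|>0$. For $\alpha<0$, $\mathcal{C}^+_\alpha(\mathbb{R}^n)$ is the set of functions $f=(1-\alpha\varphi)^{1/\alpha}$ where $\varphi\in\mathrm{Conv}(\mathbb{R}^n)$ is nonnegative and coercive ($\varphi$ is called the base of $f$), with the convention that $f(x)=0$ (and $(1-\alpha\varphi(x))^{s}=0$ for $s<0$) when $\varphi(x)=+\infty$. *)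

(* Defs.v *)
From HB Require Import structures.
From mathcomp Require Import all_boot all_order all_algebra.
From mathcomp Require Import all_classical all_reals all_analysis.
Set Implicit Arguments. Unset Strict Implicit. Unset Printing Implicit Defensive.
Import Order.TTheory GRing.Theory Num.Theory.
Import numFieldNormedType.Exports.
Local Open Scope classical_set_scope.
Local Open Scope ring_scope.

Section Defs.
Context {R : realType}.

Definition enorm (n : nat) (x : 'rV[R]_n) : R :=
  Num.sqrt (\sum_(i < n) x ord0 i ^+ 2).

(* Lebesgue integral over R^n of a function with values in \bar R, written as
   the iterated integral  \int dx_1 ... \int dx_n F(x_1,...,x_n)
   w.r.t. the one-dimensional Lebesgue measure (equal to the integral w.r.t.
   n-dimensional Lebesgue measure for nonnegative Borel functions, by Tonelli). *)
Fixpoint integral_Rn (n : nat) : ('rV[R]_n -> \bar R) -> \bar R :=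
  match n with
  | 0 => fun F => F 0
  | m.+1 => fun F =>
      (\int[@lebesgue_measure R]_t
         integral_Rn (fun v : 'rV[R]_m => F (row_mx (\row_(j < 1) t) v)))%E
  end.

Definition in_Conv (n : nat) (phi : 'rV[R]_n -> \bar R) : Prop :=
  [/\ (exists x, phi x < +oo)%E,
      (forall x, phi x > -oo)%E,
      (forall (x y : 'rV[R]_n) (t : R), 0 < t < 1 ->
         (phi ((1 - t) *: x + t *: y)%R <= (1 - t)%:E * phi x + t%:E * phi y)%E)
    & lower_semicontinuous phi].

(* coercive: liminf_{|x| -> oo} phi(x)/|x| > 0, i.e. there is c > 0 such that
   phi(x) >= c |x| for all x of sufficiently large norm. *)
Definition coercive (n : nat) (phi : 'rV[R]_n -> \bar R) : Prop :=
  exists c : R, 0 < c /\ exists M : R,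
    forall x, M <= enorm x -> ((c * enorm x)%:E <= phi x)%E.

Definition is_base (n : nat) (phi : 'rV[R]_n -> \bar R) : Prop :=
  [/\ in_Conv phi, (forall x, (0 <= phi x)%E) & coercive phi].

(* (1 - alpha phi(x))^s, with the convention that it is 0 when phi(x) = +oo
   (used with s < 0). *)
Definition powbase (n : nat) (alpha : R) (phi : 'rV[R]_n -> \bar R) (s : R)
  (x : 'rV[R]_n) : R :=
  match phi x with
  | r%:E => powR (1 - alpha * r) s
  | _ => 0
  end.

Definition fCalpha (n : nat) (alpha : R) (phi : 'rV[R]_n -> \bar R)
  (x : 'rV[R]_n) : R := powbase alpha phi alpha^-1 x.

End Defs.

(* Main.v *)
Set Warnings "-all".
Require Import Defs.
From HB Require Import structures.
From mathcomp Require Import all_boot all_order all_algebra.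
From mathcomp Require Import all_classical all_reals all_analysis.
From mathcomp Require Import measurable_realfun ring lra.
Import Order.TTheory GRing.Theory Num.Theory.
Import numFieldNormedType.Exports.
Local Open Scope ring_scope.
Section Aux.
Local Open Scope classical_set_scope.
Context {R : realType}.
Local Notation mu := (@lebesgue_measure R).
Lemma le_int_nomeas (f g : R -> \bar R) :
  (forall x, (0 <= f x)%E) -> (forall x, (f x <= g x)%E) ->
  (\int[mu]_t f t <= \int[mu]_t g t)%E.
Proof.
move=> f0 fg.
have g0 x : (0 <= g x)%E by apply: le_trans (fg x).
rewrite !ge0_integralTE//; apply: ereal_sup_le => _ [h /= hf <-].
by exists h => //= x; apply: le_trans (hf x) (fg x).
Qed.

Lemma integral_Rn_ge0 (n : nat) (F : 'rV[R]_n -> \bar R) :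
  (forall x, (0 <= F x)%E) -> (0 <= integral_Rn F)%E.
Proof.
elim: n F => [|n IH] F F0 /=; first exact: F0.
by apply: integral_ge0 => t _; apply: IH.
Qed.

Lemma integral_Rn_le (n : nat) (F G : 'rV[R]_n -> \bar R) :
  (forall x, (0 <= F x)%E) -> (forall x, (F x <= G x)%E) ->
  (integral_Rn F <= integral_Rn G)%E.
Proof.
elim: n F G => [|n IH] F G F0 FG /=; first exact: FG.
apply: le_int_nomeas => t; first exact: integral_Rn_ge0.
by apply: IH.
Qed.

Lemma row_mx_ord0 (m : nat) (t : R) (v : 'rV[R]_m) :
  (row_mx (\row_(j < 1) t) v) ord0 (ord0 : 'I_m.+1) = t.
Proof.
have -> : (ord0 : 'I_m.+1) = lshift m (ord0 : 'I_1) by apply: val_inj.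
by rewrite row_mxEl mxE.
Qed.

Lemma row_mx_lift (m : nat) (t : R) (v : 'rV[R]_m) (i : 'I_m) :
  (row_mx (\row_(j < 1) t) v) ord0 (lift ord0 i) = v ord0 i.
Proof.
have -> : (lift ord0 i : 'I_m.+1) = rshift 1 i by apply: val_inj.
by rewrite row_mxEr.
Qed.

Lemma integral_Rn_prod (h : R -> R) (K : R) : (forall t, 0 <= h t) ->
  measurable_fun setT h -> (\int[mu]_t (h t)%:E <= K%:E)%E ->
  forall m c, 0 <= c ->
  (integral_Rn (fun v : 'rV[R]_m => (c * \prod_(i < m) h (v ord0 i))%:E)
    <= (c * K ^+ m)%:E)%E.
Proof.
move=> h0 mh hK.
have K0 : 0 <= K.
  by rewrite -lee_fin; apply: le_trans hK; apply: integral_ge0 => t _; rewrite lee_fin.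
elim=> [|m IH] c c0 /=; first by rewrite big_ord0.
apply: (@le_trans _ _ (\int[mu]_t ((c * K ^+ m)%:E * (h t)%:E))%E).
  apply: le_int_nomeas => t.
    apply: integral_Rn_ge0 => v; rewrite lee_fin; apply: mulr_ge0 => //.
    by apply: prodr_ge0 => i _.
  set G := (fun v : 'rV[R]_m => _).
  have -> : G = (fun v => ((c * h t) * \prod_(i < m) h (v ord0 i))%:E).
    apply/funext => v; rewrite /G big_ord_recl row_mx_ord0 mulrA.
    by under eq_bigr do rewrite row_mx_lift.
  by rewrite -EFinM mulrAC; apply: IH; apply: mulr_ge0.
rewrite ge0_integralZl_EFin//; first last.
- by apply: mulr_ge0 => //; apply: exprn_ge0.
- by apply/measurable_EFinP.
- by move=> t _; rewrite lee_fin.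
rewrite exprSr mulrA [leRHS]EFinM; apply: lee_wpmul2l => //.
by rewrite lee_fin; apply: mulr_ge0 => //; apply: exprn_ge0.
Qed.

Lemma powR_cont (r a : R) : 0 < a -> {for a, continuous (fun b : R => powR b r)}.
Proof.
move=> a0; apply/differentiable_continuous/derivable1_diffP.
by apply: derivable_powR; rewrite in_itv /= andbT.
Qed.

Lemma int_pow_decay (s : R) : 1 < s ->
  (\int[mu]_t (powR (1 + `|t|) (-s))%:E = (2 / (s - 1))%:E)%E.
Proof.
move=> s1.
set h := fun t : R => powR (1 + `|t|) (-s).
have h0 t : 0 <= h t by apply: powR_ge0.
have ch : continuous h.
  move=> x; apply: (@continuous_comp _ _ _ (fun t : R => 1 + `|t|) (fun b : R => powR b (-s))).
    by apply: (cvgD (cvg_cst _)); exact: norm_continuous.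
  by apply: powR_cont; rewrite ltr_pwDl.
have hsym : h =1 h \o -%R by move=> t; rewrite /h /= normrN.
rewrite (ge0_symfun_integralT h0 ch hsym) -set_itvcy.
set r := 1 - s.
have r0 : r != 0 by rewrite /r subr_eq0 lt_eqF.
set G := fun x : R => powR (1 + x) r.
set F := r^-1 \*: G.
have dG (x : R) : -1 < x -> is_derive x 1 G (r * powR (1 + x) (r - 1)).
  move=> x1.
  have x10 : 0 < 1 + x by rewrite -ltrBlDl sub0r.
  have d1 : is_derive x 1 (fun y : R => 1 + y) 1.
    have H : is_derive x 1 (cst 1 \+ id) (0 + 1) by exact: is_deriveD.
    by rewrite add0r in H.
  have := @is_derive1_comp R (fun b : R => powR b r) (fun y : R => 1 + y) x
     (r * powR (1 + x) (r - 1)) 1 (is_derive1_powR r x10) d1.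
  by rewrite mulr1.
have dF (x : R) : -1 < x -> is_derive x 1 F (r^-1 *: (r * powR (1 + x) (r - 1))).
  by move=> x1; apply: is_deriveZ; apply: dG.
rewrite (@ge0_continuous_FTC2y R h F 0 0); first last.
- move=> x; rewrite in_itv/= andbT => x0.
  have x1 : -1 < x by apply: lt_trans x0; rewrite ltrN10.
  rewrite derive1E; have [_ ->] := dF x x1.
  rewrite /GRing.scale /= mulKf // /h ger0_norm ?(ltW x0) //.
  by rewrite /r addrAC subrr add0r.
- apply: cvg_at_right_filter; apply: differentiable_continuous.
  by apply/derivable1_diffP; have [] := dF 0 (ltrN10 R).
- move=> x x0; have x1 : -1 < x by apply: lt_trans x0; rewrite ltrN10.
  by have [] := dF x x1.
- have r0' : 0 < - r by rewrite /r opprB subr_gt0.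
  have G0 : G x @[x --> +oo] --> 0.
    apply/cvgr0Pnorm_lt => e e0.
    set B := powR e r^-1.
    have B0 : 0 < B by apply: powR_gt0.
    near=> x.
    have xB : B < x by near: x; apply: nbhs_pinfty_gt; rewrite num_real.
    have x0 : 0 < 1 + x by apply: lt_trans (ltr_pwDl ltr01 (le_refl x)); apply: lt_trans xB.
    have Bx : B < 1 + x by apply: lt_trans xB _; rewrite ltr_pwDl.
    rewrite ger0_norm ?powR_ge0 // /G.
    have -> : e = powR B r by rewrite /B -powRrM mulVf // powRr1 // ltW.
    have Hp y : powR y r = (powR y (- r))^-1 by rewrite -powRN opprK.
    rewrite (Hp B) (Hp (1 + x)) ltf_pV2 ?posrE ?powR_gt0 //.
    by apply: gt0_ltr_powR => //; rewrite nnegrE ltW.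
  by rewrite -(scaler0 R r^-1); apply: cvgZr.
- exact: continuous_subspaceT.
- by move=> x _.
- rewrite /F /G /= addr0 powR1.
  rewrite add0e -EFinM -[r^-1%:A]/(r^-1 * 1) mulr1; congr EFin.
  by rewrite /r -invrN opprB.
Unshelve. all: by end_near. Qed.
Lemma enorm_ge0 (n : nat) (x : 'rV[R]_n) : 0 <= enorm x.
Proof. exact: sqrtr_ge0. Qed.

Lemma coord_le_enorm (n : nat) (x : 'rV[R]_n) (i : 'I_n) : `|x ord0 i| <= enorm x.
Proof.
rewrite /enorm -sqrtr_sqr ler_sqrt; last by apply: sumr_ge0 => j _; apply: sqr_ge0.
rewrite (bigD1 i) //= ler_wpDr //; apply: sumr_ge0 => j _; exact: sqr_ge0.
Qed.

Lemma prod_le_enorm (n : nat) (x : 'rV[R]_n) :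
  \prod_(i < n) (1 + `|x ord0 i|) <= (1 + enorm x) ^+ n.
Proof.
have -> : (1 + enorm x) ^+ n = \prod_(i < n) (1 + enorm x).
  by rewrite prodr_const card_ord.
apply: ler_prod => i _; rewrite addr_ge0 //= lerD2l; exact: coord_le_enorm.
Qed.

Lemma powR_prod (n : nat) (F : 'I_n -> R) (q : R) : (forall i, 0 <= F i) ->
  powR (\prod_(i < n) F i) q = \prod_(i < n) powR (F i) q.
Proof.
move=> F0.
pose K := fun a b : R => 0 <= a /\ powR a q = b.
suff [] : K (\prod_(i < n) F i) (\prod_(i < n) powR (F i) q) by [].
apply: (big_rec2 K); first by split => //; rewrite powR1.
move=> i a b _ [a0 <-]; split; first exact: mulr_ge0.
by rewrite powRM.
Qed.

Lemma powR_le_neg (q a b : R) : q <= 0 -> 0 < a -> a <= b -> powR b q <= powR a q.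
Proof.
move=> q0 a0 ab.
have b0 : 0 < b by apply: lt_le_trans ab.
have Hp y : powR y q = (powR y (- q))^-1 by rewrite -powRN opprK.
rewrite (Hp a) (Hp b) lef_pV2 ?posrE ?powR_gt0 //.
have q' : 0 <= - q by rewrite oppr_ge0.
apply: (ge0_ler_powR q') => //; rewrite nnegrE ltW //.
Qed.

Lemma prod_bound (n : nat) (x : 'rV[R]_n) (q : R) : q <= 0 -> (0 < n)%N ->
  powR (1 + enorm x) q <= \prod_(i < n) powR (1 + `|x ord0 i|) (q / n%:R).
Proof.
move=> q0 n0.
have nR : n%:R != 0 :> R by rewrite pnatr_eq0 -lt0n.
rewrite -powR_prod; last by move=> i; rewrite addr_ge0.
rewrite {1}(_ : q = n%:R * (q / n%:R)); last by rewrite mulrC divfK.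
rewrite powRrM powR_mulrn ?addr_ge0 ?enorm_ge0 //.
apply: powR_le_neg.
- by rewrite pmulr_lle0 // invr_gt0 ltr0n.
- by apply: prodr_gt0 => i _; rewrite ltr_pwDl.
- exact: prod_le_enorm.
Qed.

Lemma coercive_lb (n : nat) (alpha : R) (phi : 'rV[R]_n -> \bar R) :
  alpha < 0 -> (forall x, (0 <= phi x)%E) -> coercive phi ->
  exists2 k : R, 0 < k & forall x r, phi x = r%:E -> k * (1 + enorm x) <= 1 - alpha * r.
Proof.
move=> a0 phi0 [c [c0 [M HM]]].
have a_pos : 0 < - alpha * c by rewrite mulr_gt0 // oppr_gt0.
set k := Num.min (Num.min 1 (- alpha * c)) (1 + `|M|)^-1.
have M0 : 0 < 1 + `|M| by rewrite ltr_pwDl.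
exists k; first by rewrite /k !lt_min ltr01 a_pos invr_gt0 M0.
move=> x r Hr.
have r0 : 0 <= r by rewrite -lee_fin -Hr.
have k1 : k <= 1 by rewrite /k !ge_min lexx.
have ka : k <= - alpha * c by rewrite /k !ge_min lexx orbT.
have kM : k <= (1 + `|M|)^-1 by rewrite /k ge_min lexx orbT.
have k0 : 0 < k by rewrite /k !lt_min ltr01 a_pos invr_gt0 M0.
have x0 : 0 <= enorm x := enorm_ge0 _ x.
case: (leP M (enorm x)) => hx.
- have := HM x hx; rewrite Hr lee_fin => cr.
  nra.
- have : k * (1 + enorm x) <= (1 + `|M|)^-1 * (1 + `|M|).
    apply: ler_pM => //; first exact: ltW.
      by rewrite addr_ge0.
    by rewrite lerD2l; apply: (le_trans (ltW hx)); exact: ler_norm.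
  rewrite mulVf ?gt_eqF //.
  nra.
Qed.

Lemma cont_h (s : R) : continuous (fun t : R => powR (1 + `|t|) (-s)).
Proof.
move=> x; apply: (@continuous_comp _ _ _ (fun t : R => 1 + `|t|) (fun b : R => powR b (-s))).
  by apply: (cvgD (cvg_cst _)); exact: norm_continuous.
by apply: powR_cont; rewrite ltr_pwDl.
Qed.

Lemma powbase_ge0 (n : nat) (alpha : R) (phi : 'rV[R]_n -> \bar R) (e : R) x :
  0 <= powbase alpha phi e x.
Proof. by rewrite /powbase; case: (phi x) => [r| |] //; apply: powR_ge0. Qed.

Lemma core (n : nat) (alpha : R) (phi : 'rV[R]_n -> \bar R) (p e : R) :
  alpha < 0 -> (forall x, (0 <= phi x)%E) -> coercive phi -> 0 <= p ->
  e + n%:R + p < 0 ->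
  (integral_Rn (fun x => (powR (enorm x) p * powbase alpha phi e x)%:E) < +oo)%E.
Proof.
move=> a0 phi0 coe p0 hen.
case: n phi phi0 coe hen => [|m] phi phi0 coe hen; first by rewrite /= ltry.
have [k k0 Hk] := coercive_lb _ _ _ a0 phi0 coe.
have m0 : 0 < m.+1%:R :> R by rewrite ltr0n.
have e0 : e < 0 by lra.
set q := (p + e) / m.+1%:R.
set s := - q.
have s1 : 1 < s.
  rewrite /s /q -mulNr ltr_pdivlMr // mul1r; lra.
set h := fun t : R => powR (1 + `|t|) (-s).
have h0 t : 0 <= h t by apply: powR_ge0.
have mh : measurable_fun setT h by apply: continuous_measurable_fun; exact: cont_h.
have hint := int_pow_decay _ s1.
set C := powR k e.
apply: (@le_lt_trans _ _ (integral_Rn (fun v : 'rV[R]_m.+1 =>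
     (C * \prod_(i < m.+1) h (v ord0 i))%:E))).
  apply: integral_Rn_le => x.
    by rewrite lee_fin; apply: mulr_ge0; [apply: powR_ge0 | apply: powbase_ge0].
  rewrite lee_fin /powbase.
  case E: (phi x) => [r| |]; rewrite ?mulr0; last 2 first.
  - by apply: mulr_ge0; [apply: powR_ge0 | apply: prodr_ge0].
  - by apply: mulr_ge0; [apply: powR_ge0 | apply: prodr_ge0].
  have x0 : 0 <= enorm x := enorm_ge0 _ x.
  have x1 : 0 < 1 + enorm x by rewrite ltr_pwDl.
  apply: (@le_trans _ _ (powR (1 + enorm x) p * (C * powR (1 + enorm x) e))).
    apply: ler_pM; rewrite ?powR_ge0 //.
      by apply: (ge0_ler_powR p0); rewrite ?nnegrE ?ler_wpDl // ltW.
    apply: (@le_trans _ _ (powR (k * (1 + enorm x)) e)).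
      by apply: powR_le_neg; [exact: ltW | rewrite mulr_gt0 | exact: Hk].
    by rewrite powRM // ltW.
  rewrite mulrCA -powRD; last by apply/implyP => _; rewrite gt_eqF.
apply: ler_wpM2l; first exact: powR_ge0.
  have -> : \prod_(i < m.+1) h (x ord0 i) = \prod_(i < m.+1) powR (1 + `|x ord0 i|) q.
    by apply: eq_bigr => i _; rewrite /h /s opprK.
  by apply: prod_bound => //; lra.
apply: (le_lt_trans (integral_Rn_prod h (2 / (s - 1)) h0 mh _ m.+1 C _)).
- by rewrite hint.
- exact: powR_ge0.
- exact: ltry.
Qed.

Lemma inv_bound (alpha D : R) : alpha < 0 -> 0 < D -> - D^-1 < alpha ->
  alpha^-1 + D < 0.
Proof.
move=> a0 D0 h.
have h1 : -1 < alpha * D.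
  by move: h; rewrite -(ltr_pM2r D0) mulNr mulVf ?gt_eqF.
have -> : alpha^-1 + D = alpha^-1 * (1 + alpha * D).
  by rewrite mulrDr mulr1 mulrA mulVf ?lt_eqF // mul1r.
rewrite nmulr_rlt0 ?invr_lt0 //; lra.
Qed.

End Aux.

Theorem lemma2p2 (R : realType) (n : nat) (alpha : R)
    (phi : 'rV[R]_n -> \bar R) :
  alpha < 0 -> is_base phi ->
  (forall l p : R, 0 <= l -> l < n%:R -> 0 <= p ->
     - (n%:R - l + p)^-1 < alpha ->
     (integral_Rn (fun x => (powR (enorm x) p *
                              powbase alpha phi (alpha^-1 - l) x)%:E)
       < +oo)%E)
  /\
  (- (n%:R)^-1 < alpha ->
     (integral_Rn (fun x => (fCalpha alpha phi x)%:E) < +oo)%E /\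
     (integral_Rn (fun x => (powR (fCalpha alpha phi x) (1 - alpha))%:E)
       < +oo)%E).
Proof.
move=> a0 [_ phi0 coe]; split.
  move=> l p l0 ln p0 hal.
  apply: core => //.
  have := inv_bound _ _ a0 _ hal.
  have D0 : 0 < n%:R - l + p by lra.
  move=> /(_ D0); lra.
move=> hn.
have n0 : 0 < n%:R :> R.
  case: n phi phi0 coe hn => [|m] phi phi0 coe hn; last by rewrite ltr0n.
  by move: hn; rewrite invr0 oppr0 ltNge (ltW a0).
have hb := inv_bound _ _ a0 n0 hn.
split.
  have -> : (fun x => (fCalpha alpha phi x)%:E) =
      (fun x => (powR (enorm x) 0 * powbase alpha phi (alpha^-1) x)%:E).
    by apply/funext => x; rewrite powRr0 mul1r.
  apply: core => //; lra.
have -> : (fun x => (powR (fCalpha alpha phi x) (1 - alpha))%:E) =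
    (fun x => (powR (enorm x) 0 * powbase alpha phi (alpha^-1 - 1) x)%:E).
  apply/funext => x; rewrite powRr0 mul1r /fCalpha /powbase.
  case: (phi x) => [r| |] /=.
  - by rewrite -powRrM mulrBr mulr1 mulVf ?lt_eqF.
  - by rewrite powR0 // gt_eqF // subr_gt0; apply: lt_trans a0 _.
  - by rewrite powR0 // gt_eqF // subr_gt0; apply: lt_trans a0 _.
apply: core => //; lra.
Qed.
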